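(* Let $k$ be a field and $\mathsf{E}$ a left strictly locally finite $k$-linear category. Then the essential image of the comodule inclusion functor $\Upsilon_{\mathsf{E}^{op}}$ from right $\mathcal{C}_\mathsf{E}$-comodules to right $\mathsf{E}$-modules is closed under extensions: if $0\to L\to M\to N\to0$ is a short exact sequence of right $\mathsf{E}$-modules and $L$ and $N$ are each isomorphic to $\Upsilon_{\mathsf{E}^{op}}$ of some right $\mathcal{C}_\mathsf{E}$-comodule, then so is $M$.
   Context: A small $k$-linear category $\mathsf{E}$ has $k$-vector spaces $\operatorname{Hom}_\mathsf{E}(x,y)$, $k$-bilinear associative composition and identities with $\mathrm{id}_x\ne0$. A right $\mathsf{E}$-module is a $k$-linear functor $N:\mathsf{E}^{op}\to k\text{-Vect}$ (action maps $\operatorname{Hom}_\mathsf{E}(x,y)\otimes_kN(y)\to N(x)$). Write $x\preceq y$ if there are $n\ge1$ and objects $x=z_0,\dots,z_n=y$ with $\operatorname{Hom}_\mathsf{E}(z_{i-1},z_i)\neq0$ for all $i$; $x\prec y$ means $x\preceq y$ and not $y\preceq x$. $\mathsf{E}$ is locally finite if all $\operatorname{Hom}_\mathsf{E}(x,y)$ are finite-dimensional and every $\{z:x\preceq z\preceq y\}$ is finite; left strictly locally finite if moreover for every $y$ there is a finite set $X_y$ of objects with $x\prec y$ for $x\in X_y$ such that every $f:z\to y$ with $z\prec y$ equals $\sum_{i=1}^nh_ig_i$ ($n\ge0$) with $g_i:z\to x_i$, $h_i:x_i\to y$, $x_i\in X_y$. $\mathcal{C}_\mathsf{E}=\bigoplus_{x,y}\mathcal{C}^{x,y}$,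 $\mathcal{C}^{x,y}=\operatorname{Hom}_\mathsf{E}(x,y)^*$; counit zero on $\mathcal{C}^{x,y}$ for $x\ne y$, evaluation at $\mathrm{id}_x$ on $\mathcal{C}^{x,x}$; comultiplication $\mathcal{C}^{x,y}\to\bigoplus_z\mathcal{C}^{x,z}\otimes\mathcal{C}^{z,y}$ dual to composition $g\otimes h\mapsto hg$. For a right comodule $(\mathcal{N},\nu:\mathcal{N}\to\mathcal{N}\otimes\mathcal{C}_\mathsf{E})$, $\varphi\cdot n=(\mathrm{id}\otimes\varphi)\nu(n)$. With $e_x$ evaluation at $\mathrm{id}_x$ on $\mathcal{C}^{x,x}$ (zero elsewhere) and $\mathrm{ev}_f$, for $f\in\operatorname{Hom}_\mathsf{E}(x,y)$, evaluation at $f$ on $\mathcal{C}^{x,y}$ (zero elsewhere): $\Upsilon_{\mathsf{E}^{op}}(\mathcal{N})(x)=e_x\cdot\mathcal{N}$ and $f$ acts $e_y\cdot\mathcal{N}\to e_x\cdot\mathcal{N}$ by $n\mapsto\mathrm{ev}_f\cdot n$. *)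

(* Defs.v *)
From HB Require Import structures.
From mathcomp Require Import all_boot all_order all_algebra.
From Stdlib Require List.
From Stdlib Require Import Relations.
Set Implicit Arguments. Unset Strict Implicit. Unset Printing Implicit Defensive.
Import GRing.Theory.
Local Open Scope ring_scope.

(* A small k-linear category.  [comp g h] is the composite "h g" (first g, then h). *)
Record klincat (k : fieldType) := KLinCat {
  Obj : Type;
  Hom : Obj -> Obj -> lmodType k;
  comp : forall x y z, Hom x y -> Hom y z -> Hom x z;
  idm : forall x, Hom x x;
  comp_linl : forall x y z (h : Hom y z), linear (fun g : Hom x y => comp g h);
  comp_linr : forall x y z (g : Hom x y), linear (fun h : Hom y z => comp g h);
  compA : forall x y z w (f : Hom x y) (g : Hom y z) (h : Hom z w),
      comp f (comp g h) = comp (comp f g) h;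
  comp_idl : forall x y (f : Hom x y), comp (idm x) f = f;
  comp_idr : forall x y (f : Hom x y), comp f (idm y) = f;
  idm_neq0 : forall x, idm x != 0
}.
Arguments Obj {k} _.
Arguments Hom {k} _ _ _.
Arguments comp {k _ _ _ _}.
Arguments idm {k _}.

Section Defs.
Variables (k : fieldType) (E : klincat k).

Definition fin_dim (V : lmodType k) : Prop :=
  exists s : seq V, forall v : V, exists c : nat -> k,
    v = \sum_(i < size s) c i *: nth 0 s i.

Definition hom_nz (x y : Obj E) : Prop := exists f : Hom E x y, f != 0.
Definition preceq : Obj E -> Obj E -> Prop := clos_trans _ hom_nz.
Definition prec (x y : Obj E) : Prop := preceq x y /\ ~ preceq y x.

Definition locally_finite : Prop :=
  (forall x y, fin_dim (Hom E x y)) /\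
  (forall x y, exists s : seq (Obj E),
      forall z, preceq x z -> preceq z y -> List.In z s).

Definition left_strictly_locally_finite : Prop :=
  locally_finite /\
  forall y : Obj E, exists X : seq (Obj E),
    (forall x, List.In x X -> prec x y) /\
    forall z (f : Hom E z y), prec z y ->
      exists t : seq {x : Obj E & (Hom E z x * Hom E x y)%type},
        (forall u, List.In u t -> List.In (projT1 u) X) /\
        f = \sum_(u <- t) comp (projT2 u).1 (projT2 u).2.

(* right E-module = k-linear functor E^op -> k-Vect;
   [mact f n] is the action of f : x -> y, sending N(y) to N(x). *)
Record rmodule := RModule {
  mcar : Obj E -> lmodType k;
  mact : forall x y, Hom E x y -> mcar y -> mcar x;
  mact_linl : forall x y (n : mcar y), linear (fun f : Hom E x y => mact f n);
  mact_linr : forall x y (f : Hom E x y), linear (mact f);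
  mact_id : forall x (n : mcar x), mact (idm x) n = n;
  mact_comp : forall x y z (g : Hom E x y) (h : Hom E y z) (n : mcar z),
      mact (comp g h) n = mact g (mact h n)
}.

Record mod_hom (M N : rmodule) := ModHom {
  mh : forall x, mcar M x -> mcar N x;
  mh_lin : forall x, linear (@mh x);
  mh_nat : forall x y (f : Hom E x y) (m : mcar M y),
      @mh x (mact f m) = mact f (@mh y m)
}.
Arguments mh {M N} _ x.

Definition short_exact (L M N : rmodule) (i : mod_hom L M) (p : mod_hom M N) : Prop :=
  forall x,
    injective (mh i x) /\
    (forall m, mh p x m = 0 <-> exists l, mh i x l = m) /\
    (forall n, exists m, mh p x m = n).

(* Right comodule over C_E = (+)_{x,y} Hom(x,y)^*.  Using the canonical
   identification N (x) Hom(x,y)^* = Lin(Hom(x,y), N) (Hom(x,y) is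
   finite-dimensional), the coaction nu : N -> N (x) C_E is recorded by its
   components: [coact x y n f] = (id (x) ev_f) nu(n) = ev_f . n. *)
Record rcomodule := RComodule {
  ccar : lmodType k;
  coact : forall x y : Obj E, ccar -> Hom E x y -> ccar;
  coact_linl : forall x y (f : Hom E x y), linear (fun n => coact n f);
  coact_linr : forall x y (n : ccar), linear (@coact x y n);
  (* nu(n) lies in the direct sum: finitely many nonzero components *)
  coact_fin : forall n : ccar, exists s : seq (Obj E),
      forall x y (f : Hom E x y), coact n f != 0 -> List.In x s /\ List.In y s;
  (* counit: (id (x) eps) nu = id, eps = sum_x e_x *)
  coact_counit : forall (n : ccar) (s : seq (Obj E)), List.NoDup s ->
      (forall x, coact n (idm x) != 0 -> List.In x s) ->
      \sum_(x <- s) coact n (idm x) = n;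
  (* coassociativity (nu (x) id) nu = (id (x) Delta) nu, component (x,z),(z,y) *)
  coact_coassoc : forall x z y (g : Hom E x z) (h : Hom E z y) (n : ccar),
      coact (coact n h) g = coact n (comp g h);
  (* ... and components (x,z),(z',y) with z <> z', where Delta vanishes *)
  coact_coassoc0 : forall x z z' y (g : Hom E x z) (h : Hom E z' y) (n : ccar),
      z <> z' -> coact (coact n h) g = 0
}.

(* M is isomorphic (as a right E-module) to Upsilon_{E^op}(C), where
   Upsilon(C)(x) = e_x . C = { coact x x c (idm x) } and f : x -> y acts
   e_y . C -> e_x . C by c |-> ev_f . c = coact x y c f. *)
Definition iso_Upsilon (M : rmodule) (C : rcomodule) : Prop :=
  exists alpha : forall x, mcar M x -> ccar C,
    (forall x, linear (alpha x)) /\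
    (forall x, injective (alpha x)) /\
    (forall x (c : ccar C),
        (exists m, alpha x m = c) <-> (exists n : ccar C, c = coact n (idm x))) /\
    (forall x y (f : Hom E x y) (m : mcar M y),
        alpha x (mact f m) = coact (alpha y m) f).

End Defs.

(* Main.v *)
Require Import Defs.
From HB Require Import structures.
From mathcomp Require Import all_boot all_order all_algebra.
From mathcomp Require Import boolp.
From Stdlib Require List.
From Stdlib Require Import Relations Lia.
Set Implicit Arguments. Unset Strict Implicit. Unset Printing Implicit Defensive.
Import GRing.Theory.
Local Open Scope ring_scope.

Section Lin.
Variables (k : fieldType) (U V : lmodType k) (g : U -> V) (H : linear g).
Lemma lin0 : g 0 = 0.
Proof.
have h := H 1 0 0; rewrite scaler0 addr0 scale1r in h.
by apply: (addIr (g 0)); rewrite add0r -h.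
Qed.
Lemma linD u v : g (u + v) = g u + g v.
Proof. by have := H 1 u v; rewrite !scale1r. Qed.
Lemma linZ a u : g (a *: u) = a *: g u.
Proof. by have := H a u 0; rewrite !addr0 lin0 addr0. Qed.
Lemma linN u : g (- u) = - g u.
Proof. by rewrite -scaleN1r linZ scaleN1r. Qed.
Lemma linsum (I : Type) (r : seq I) (P : pred I) (F : I -> U) :
  g (\sum_(i <- r | P i) F i) = \sum_(i <- r | P i) g (F i).
Proof.
elim/big_rec2: _ => [|i y1 y2 _ <-]; first exact: lin0.
by rewrite linD.
Qed.
End Lin.

Lemma sum_nz_seq (k : fieldType) (V : lmodType k) (I : Type) (t : seq I) (F : I -> V) :
  \sum_(u <- t) F u != 0 -> exists u, List.In u t /\ F u != 0.
Proof.
elim: t => [|a t IH]; first by rewrite big_nil eqxx.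
rewrite big_cons => h.
have [ha|ha] := boolP (F a == 0).
  rewrite (eqP ha) add0r in h; have [u [Hu Fu]] := IH h.
  by exists u; split => //; right.
by exists a; split => //; left.
Qed.

Lemma sum_nz_ord (k : fieldType) (V : lmodType k) n (F : 'I_n -> V) :
  \sum_(i < n) F i != 0 -> exists i, F i != 0.
Proof.
move=> h; apply: contrapT => hn; move: h; rewrite big1 ?eqxx // => i _.
by apply/eqP; apply: contrapT => hi; apply: hn; exists i; apply/negP.
Qed.

Section Construct.
Variables (k : fieldType) (E : klincat k) (M : rmodule E).

Local Notation mact := (@mact _ _ M _ _).
Definition dfun := forall x : Obj E, mcar M x.
Definition Pfin (n : dfun) : Prop := exists s : seq (Obj E),
  forall x y (f : Defs.Hom E x y), mact f (n y) != 0 -> List.In x s /\ List.In y s.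
Definition CMT := {n : dfun | Pfin n}.

HB.instance Definition _ := gen_eqMixin CMT.
HB.instance Definition _ := gen_choiceMixin CMT.

Lemma mact0 x y (f : Defs.Hom E x y) : mact f 0 = 0.
Proof. exact: lin0 (@mact_linr _ _ M _ _ f). Qed.
Lemma mactD x y (f : Defs.Hom E x y) (a b : mcar M y) : mact f (a + b) = mact f a + mact f b.
Proof. exact (linD (@mact_linr _ _ M _ _ f) a b). Qed.
Lemma mactZ x y (f : Defs.Hom E x y) c (a : mcar M y) : mact f (c *: a) = c *: mact f a.
Proof. exact (linZ (@mact_linr _ _ M _ _ f) c a). Qed.
Lemma mactN x y (f : Defs.Hom E x y) (a : mcar M y) : mact f (- a) = - mact f a.
Proof. exact (linN (@mact_linr _ _ M _ _ f) a). Qed.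
Lemma mact0l x y (m : mcar M y) : mact (0 : Defs.Hom E x y) m = 0.
Proof. exact (lin0 (@mact_linl _ _ M x _ m)). Qed.
Lemma mactDl x y (f g : Defs.Hom E x y) m : mact (f + g) m = mact f m + mact g m.
Proof. exact (linD (@mact_linl _ _ M x _ m) f g). Qed.
Lemma mactZl x y (f : Defs.Hom E x y) c m : mact (c *: f) m = c *: mact f m.
Proof. exact (linZ (@mact_linl _ _ M x _ m) c f). Qed.

Lemma CMT_eq (a b : CMT) : (forall x, sval a x = sval b x) -> a = b.
Proof.
case: a b => [a Ha] [b Hb] /= h.
have e : a = b by apply: functional_extensionality_dep.
by subst b; rewrite (Prop_irrelevance Ha Hb).
Qed.

Lemma Pfin0 : Pfin (fun x => 0).
Proof. by exists [::] => x y f; rewrite mact0 eqxx. Qed.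
Lemma PfinD a b : Pfin a -> Pfin b -> Pfin (fun x => a x + b x).
Proof.
move=> [sa Ha] [sb Hb]; exists (sa ++ sb) => x y f; rewrite mactD => h.
have [h1|h1] := boolP (mact f (a y) == 0).
  rewrite (eqP h1) add0r in h; have [? ?] := Hb _ _ _ h.
  by split; apply List.in_or_app; right.
have [? ?] := Ha _ _ _ h1; by split; apply List.in_or_app; left.
Qed.
Lemma PfinZ c a : Pfin a -> Pfin (fun x => c *: a x).
Proof.
move=> [sa Ha]; exists sa => x y f; rewrite mactZ => h; apply: (Ha _ _ f).
by apply: contra h => /eqP ->; rewrite scaler0.
Qed.
Lemma PfinN a : Pfin a -> Pfin (fun x => - a x).
Proof.
move=> [sa Ha]; exists sa => x y f; rewrite mactN => h; apply: (Ha _ _ f).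
by apply: contra h => /eqP ->; rewrite oppr0.
Qed.

Definition czero : CMT := exist _ _ Pfin0.
Definition cadd (a b : CMT) : CMT := exist _ _ (PfinD (svalP a) (svalP b)).
Definition copp (a : CMT) : CMT := exist _ _ (PfinN (svalP a)).
Definition cscale c (a : CMT) : CMT := exist _ _ (PfinZ c (svalP a)).

Lemma caddA : associative cadd.
Proof. by move=> a b c; apply: CMT_eq => x /=; rewrite addrA. Qed.
Lemma caddC : commutative cadd.
Proof. by move=> a b; apply: CMT_eq => x /=; rewrite addrC. Qed.
Lemma cadd0 : left_id czero cadd.
Proof. by move=> a; apply: CMT_eq => x /=; rewrite add0r. Qed.
Lemma caddN : left_inverse czero copp cadd.
Proof. by move=> a; apply: CMT_eq => x /=; rewrite addNr. Qed.

HB.instance Definition _ := GRing.isZmodule.Build CMT caddA caddC cadd0 caddN.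

Lemma cscaleA a b v : cscale a (cscale b v) = cscale (a * b) v.
Proof. by apply: CMT_eq => x /=; rewrite scalerA. Qed.
Lemma cscale1 : left_id 1 cscale.
Proof. by move=> a; apply: CMT_eq => x /=; rewrite scale1r. Qed.
Lemma cscaleDr : right_distributive cscale +%R.
Proof. by move=> a u v; apply: CMT_eq => x /=; rewrite scalerDr. Qed.
Lemma cscaleDl v : {morph cscale^~ v: a b / a + b}.
Proof. by move=> a b; apply: CMT_eq => x /=; rewrite scalerDl. Qed.

HB.instance Definition _ := GRing.Zmodule_isLmodule.Build k CMT cscaleA cscale1 cscaleDr cscaleDl.

Definition delta (x : Obj E) (v : mcar M x) : dfun := fun z =>
  match pselect (x = z) with
  | left e => eq_rect x (mcar M) v z e
  | right _ => 0
  end.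

Lemma delta_same x (v : mcar M x) : delta v x = v.
Proof.
rewrite /delta; case: pselect => [e|//].
by rewrite (Prop_irrelevance e erefl).
Qed.
Lemma delta_other x (v : mcar M x) z : x <> z -> delta v z = 0.
Proof. by rewrite /delta; case: pselect. Qed.

Lemma delta_lin x z : linear (fun v : mcar M x => delta v z).
Proof.
move=> c u v; have [e|ne] := pselect (x = z).
  by subst z; rewrite !delta_same.
by rewrite !delta_other // scaler0 addr0.
Qed.
Lemma delta0 x z : @delta x 0 z = 0.
Proof. exact: (lin0 (@delta_lin x z)). Qed.

Lemma Pfin_delta x (v : mcar M x) s :
  (forall x' (f : Defs.Hom E x' x), mact f v != 0 -> List.In x' s) ->
  Pfin (delta v).
Proof.
move=> Hs; exists (x :: s) => x' y f.
have [e|ne] := pselect (x = y); last by rewrite delta_other // mact0 eqxx.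
subst y; rewrite delta_same => h; split; [right; exact: Hs h| left; done].
Qed.

Lemma Pfin_coact x y (n : CMT) (f : Defs.Hom E x y) : Pfin (delta (mact f (sval n y))).
Proof.
case: n => n [s Hs] /=; apply: (@Pfin_delta _ _ s) => x' g.
by rewrite -mact_comp => /Hs [].
Qed.

Definition ccoact x y (n : CMT) (f : Defs.Hom E x y) : CMT :=
  exist _ _ (Pfin_coact n f).

Lemma ccoact_linl x y (f : Defs.Hom E x y) : linear (fun n : CMT => ccoact n f).
Proof.
move=> c u v; apply: CMT_eq => z /=.
by rewrite mactD mactZ (@delta_lin x z c).
Qed.

Lemma ccoact_linr x y (n : CMT) : linear (@ccoact x y n).
Proof.
move=> c u v; apply: CMT_eq => z /=.
by rewrite mactDl mactZl (@delta_lin x z c).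
Qed.

Lemma ccoact_fin (n : CMT) : exists s : seq (Obj E),
      forall x y (f : Defs.Hom E x y), ccoact n f != 0 -> List.In x s /\ List.In y s.
Proof.
case: (svalP n) => s Hs; exists s => x y f h; apply: (Hs _ _ f).
apply: contra h => /eqP h0; apply/eqP; apply: CMT_eq => z /=.
by rewrite h0 delta0.
Qed.

Lemma sval_sum (s : seq (Obj E)) (F : Obj E -> CMT) z :
  sval (\sum_(x <- s) F x) z = \sum_(x <- s) sval (F x) z.
Proof.
elim: s => [|a s IH]; first by rewrite !big_nil.
by rewrite !big_cons /= IH.
Qed.

Lemma sum_delta (s : seq (Obj E)) (w : dfun) z : List.NoDup s ->
  \sum_(x <- s) delta (w x) z = if pselect (List.In z s) then w z else 0.
Proof.
elim: s => [|a s IH] /=; first by rewrite big_nil; case: pselect => // [[]].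
move=> /List.NoDup_cons_iff [hn hnd].
rewrite big_cons IH //.
have [e|ne] := pselect (a = z).
  subst a; rewrite delta_same.
  case: (pselect (List.In z s)) => // hh.
  case: (pselect (z = z \/ List.In z s)) => [hh2|[]]; [by rewrite addr0 | by left].
rewrite delta_other // add0r.
case: (pselect (List.In z s)) => h1; case: (pselect (a = z \/ List.In z s)) => h2 //.
  by exfalso; apply: h2; right.
by case: h2 => // e; exfalso; apply: ne.
Qed.

Lemma ccoact_counit (n : CMT) (s : seq (Obj E)) : List.NoDup s ->
      (forall x, ccoact n (idm x) != 0 -> List.In x s) ->
      \sum_(x <- s) ccoact n (idm x) = n.
Proof.
move=> hnd hs; apply: CMT_eq => z; rewrite sval_sum /=.
under eq_bigr do rewrite mact_id.
rewrite (sum_delta (sval n)) //.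
case: pselect => // hz.
apply/eqP; apply: contraT => hnz; exfalso; apply: hz; apply: hs.
apply: contra hnz => /eqP h; move/(f_equal (fun c : CMT => sval c z)): h => /=.
by rewrite mact_id delta_same => ->.
Qed.

Lemma ccoact_coassoc x z y (g : Defs.Hom E x z) (h : Defs.Hom E z y) (n : CMT) :
      ccoact (ccoact n h) g = ccoact n (Defs.comp g h).
Proof. by apply: CMT_eq => w /=; rewrite delta_same mact_comp. Qed.

Lemma ccoact_coassoc0 x z z' y (g : Defs.Hom E x z) (h : Defs.Hom E z' y) (n : CMT) :
      z <> z' -> ccoact (ccoact n h) g = 0.
Proof.
move=> ne; apply: CMT_eq => w /=.
rewrite (@delta_other z' _ z); last by move=> e; apply: ne.
by rewrite mact0 delta0.
Qed.

Definition CM : rcomodule E := RComodule ccoact_linl ccoact_linr ccoact_fin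
  ccoact_counit ccoact_coassoc ccoact_coassoc0.

Definition fsupp y (m : mcar M y) : Prop := exists s : seq (Obj E),
  forall x (f : Defs.Hom E x y), mact f m != 0 -> List.In x s.

Definition calpha (Hf : forall y (m : mcar M y), fsupp m) x (m : mcar M x) : CMT :=
  exist _ _ (let: ex_intro s Hs := Hf x m in @Pfin_delta x m s Hs).

Lemma iso_CM : (forall y (m : mcar M y), fsupp m) -> iso_Upsilon M CM.
Proof.
move=> Hf.
have valpha : forall x m z, sval (calpha Hf m) z = @delta x m z.
  by move=> x m z; rewrite /calpha; case: (Hf x m).
exists (calpha Hf); split; [|split; [|split]].
- move=> x c u v; apply: CMT_eq => z /=;
  by rewrite (@delta_lin x z c).
- move=> x u v /(f_equal (fun c : CMT => sval c x)).
  by rewrite ?valpha !delta_same.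
- move=> x c; split.
    move=> [m <-]; exists (calpha Hf m); apply: CMT_eq => z /=.
    by rewrite ?valpha mact_id delta_same.
  move=> [n ->]; exists (sval n x); apply: CMT_eq => z /=.
  by rewrite ?valpha mact_id.
- move=> x y f m; apply: CMT_eq => z /=.
  by rewrite ?valpha delta_same.
Qed.

End Construct.

Definition fin T (A : T -> Prop) := exists s : seq T, forall x, A x -> List.In x s.

Lemma fin_U2 T (A B : T -> Prop) : fin A -> fin B -> fin (fun x => A x \/ B x).
Proof.
move=> [sa Ha] [sb Hb]; exists (sa ++ sb) => x [h|h]; apply: List.in_or_app.
  by left; apply: Ha. by right; apply: Hb.
Qed.

Lemma fin_bigU I T (S : seq I) (A : I -> T -> Prop) :
  (forall i, List.In i S -> fin (A i)) -> fin (fun x => exists i, List.In i S /\ A i x).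
Proof.
elim: S => [|a S IH] h; first by exists [::] => x [i [[]]].
have [sa Ha] := h a (or_introl erefl).
have [sb Hb] := IH (fun i hi => h i (or_intror hi)).
exists (sa ++ sb) => x [i [[<-|hi] hx]]; apply: List.in_or_app.
  by left; apply: Ha.
by right; apply: Hb; exists i.
Qed.

Lemma In_mem (T : eqType) (x : T) s : x \in s -> List.In x s.
Proof.
elim: s => [|a s IH] //=; rewrite in_cons => /orP [/eqP ->|h]; [by left|by right; apply: IH].
Qed.

Lemma fin_ord n T (A : 'I_n -> T -> Prop) :
  (forall i, fin (A i)) -> fin (fun x => exists i, A i x).
Proof.
move=> h; have [s Hs] := @fin_bigU _ _ (enum 'I_n) A (fun i _ => h i).
exists s => x [i hi]; apply: Hs; exists i; split => //.
by apply: In_mem; rewrite mem_enum.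
Qed.

Lemma fsupp_fin k (E : klincat k) (Q : rmodule E) y (m : mcar Q y) :
  fsupp m -> fin (fun z => exists g : Defs.Hom E z y, mact g m != 0).
Proof. by move=> [s Hs]; exists s => z [g hg]; apply: (Hs z g). Qed.

Section Main.
Variables (k : fieldType) (E : klincat k).

Lemma fsupp_iso (Q : rmodule E) (C : rcomodule E) : iso_Upsilon Q C ->
  forall y (m : mcar Q y), fsupp m.
Proof.
case=> alpha [lin [inj [_ nat]]] y m.
case: (coact_fin (alpha y m)) => s Hs; exists s => x f h.
apply: (fun h => proj1 (Hs x y f h)); rewrite -nat.
apply: contra h => /eqP h0; apply/eqP; apply: (inj x).
by rewrite h0 (lin0 (lin x)).
Qed.

Variables (HE : left_strictly_locally_finite E)
    (L M N : rmodule E) (i : mod_hom L M) (p : mod_hom M N)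
    (Hex : short_exact i p)
    (HLf : forall y (m : mcar L y), fsupp m)
    (HNf : forall y (m : mcar N y), fsupp m).

Lemma ker_fsupp y (m : mcar M y) : mh p m = 0 -> fsupp m.
Proof.
move=> /((proj1 (proj2 (Hex y))) m) [l Hl].
have [s Hs] := HLf l; exists s => x f h; apply: (Hs x f).
apply: contra h => /eqP h0; apply/eqP.
by rewrite -Hl -mh_nat h0 (lin0 (@mh_lin _ _ _ _ i x)).
Qed.

Lemma prec_irr (x : Obj E) : ~ prec x x.
Proof. by case. Qed.

Lemma prec_trans (x y z : Obj E) : prec x y -> prec y z -> prec x z.
Proof.
move=> [xy nyx] [yz nzy]; split; first exact: t_trans xy yz.
by move=> zx; apply: nyx; apply: t_trans yz zx.
Qed.

Variable (S : seq (Obj E)).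

Definition Goal (x : Obj E) := forall m' : mcar M x,
  (forall z (g : Defs.Hom E z x), mact g (mh p m') != 0 -> List.In z S) -> fsupp m'.

Lemma Goal_notS x : ~ List.In x S -> Goal x.
Proof.
move=> xS m' hS; apply: ker_fsupp; apply/eqP; apply: contraT => h; exfalso.
by apply: xS; apply: (hS x (idm x)); rewrite mact_id.
Qed.

Lemma Goal_step x : (forall x', prec x' x -> Goal x') -> Goal x.
Proof.
move=> IH m' hS.
case: HE => [[Hfd Hlf] Hstrict].
have [I0 HI0] := Hlf x x.
have [X [HX Hdec]] := Hstrict x.
pose W x' z := exists (h : Defs.Hom E x' x) (g : Defs.Hom E z x'),
   mact g (mact h m') != 0.
have finW : forall x', List.In x' X -> fin (W x').
  move=> x' hx'; have [b Hb] := Hfd x' x.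
  have G : forall j, fsupp (mact (nth 0 b j) m').
    move=> j; apply: (IH x' (HX x' hx')) => z g.
    by rewrite mh_nat -mact_comp; apply: hS.
  have [s Hs] := @fin_ord (size b) _
     (fun j z => exists g : Defs.Hom E z x', mact g (mact (nth 0 b j) m') != 0)
     (fun j => fsupp_fin (G j)).
  exists s => z [h [g hg]]; apply: Hs.
  have [c Hc] := Hb h.
  move: hg; rewrite Hc (linsum (@mact_linl _ _ M x' x m')).
  rewrite (linsum (@mact_linr _ _ M z x' g)) => /sum_nz_ord [j hj].
  exists j, g; apply: contra hj => /eqP h0.
  by rewrite mactZl mactZ h0 scaler0.
have finI : fin (fun z => preceq x z /\ preceq z x).
  by exists I0 => z [h1 h2]; apply: HI0.
have [s Hs] := fin_U2 finI (fin_bigU finW).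
exists s => z f hf; apply: Hs.
have fnz : f != 0 by apply: contra hf => /eqP ->; rewrite mact0l.
have zx : preceq z x by apply: t_step; exists f.
have [xz|xz] := pselect (preceq x z); first by left.
right.
have [t [Ht Hf]] := Hdec z f (conj zx xz).
move: hf; rewrite Hf (linsum (@mact_linl _ _ M z x m')) => /sum_nz_seq [u [hu]].
rewrite mact_comp => hnz.
exists (projT1 u); split; first exact: Ht.
by exists (projT2 u).2, (projT2 u).1.
Qed.

Definition odec (a b : Obj E) : {a = b} + {a <> b} := pselect (a = b).

Lemma Goal_ind n : forall (l : seq (Obj E)) x, (length l <= n)%coq_nat ->
  (forall s, List.In s S -> prec s x -> List.In s l) -> Goal x.
Proof.
elim: n => [|n IHn] l x hl hb; apply: Goal_step => x' hx';
  (have [xS|xS] := pselect (List.In x' S); last exact: Goal_notS).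
- have := hb x' xS hx'; case: l hl {hb} => [|? ?] //= hl; lia.
- apply: (IHn (List.remove odec x' l)).
    have := @List.remove_length_lt _ odec l x' (hb x' xS hx'); lia.
  move=> s sS hs; apply: List.in_in_remove.
    by move=> e; subst; apply: (prec_irr hs).
  by apply: hb => //; apply: prec_trans hs hx'.
Qed.

End Main.

Lemma M_fsupp k (E : klincat k) (HE : left_strictly_locally_finite E)
    (L M N : rmodule E) (i : mod_hom L M) (p : mod_hom M N)
    (Hex : short_exact i p)
    (HLf : forall y (m : mcar L y), fsupp m)
    (HNf : forall y (m : mcar N y), fsupp m) y (m : mcar M y) : fsupp m.
Proof.
have [S HS] := HNf y (mh p m).
apply: (@Goal_ind k E HE L M N i p Hex HLf S (length S) S y) => //.
Qed.

Unset Implicit Arguments.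

Theorem proposition6p7 (k : fieldType) (E : klincat k)
    (HE : left_strictly_locally_finite E)
    (L M N : rmodule E) (i : mod_hom L M) (p : mod_hom M N)
    (Hex : short_exact i p)
    (CL CN : rcomodule E)
    (HL : iso_Upsilon L CL) (HN : iso_Upsilon N CN) :
  exists CM : rcomodule E, iso_Upsilon M CM.
Proof.
exists (CM M); apply: iso_CM.
exact: (M_fsupp HE Hex (fsupp_iso HL) (fsupp_iso HN)).
Qed.

Print Assumptions proposition6p7.
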